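(* Let $n,d\ge 2$ and $\mathbf h\in\mathbb{R}^{\binom{n+d-1}{d}}$ with $N(\mathbf h)\ge 1$ and $J_{n,d}\mathbf h\ge 0$. Define $\boldsymbol\gamma_0=\mathbf h_0$ and $\boldsymbol\gamma_i=J_{n-1,i-1}\mathbf h_{i-1}+\mathbf h_i$ for $1\le i\le d$. If exactly one of the numbers $R(\boldsymbol\gamma_0),\dots,R(\boldsymbol\gamma_d)$ is nonzero, then $$R(J_{n,d}\mathbf h)\ge \binom{n+1}{3}+1.$$
   Context: For a real vector $\mathbf x$, $N(\mathbf x)$ and $R(\mathbf x)$ denote the numbers of negative and nonzero components; inequalities are componentwise. $J_{m,j}$ is the matrix, with respect to the left lexicographic bases of degree-$j$ and degree-$(j+1)$ monomials in $m$ variables, of multiplication by the sum of the variables ($J_{n,j}$ in $x_1,\dots,x_n$, $J_{n-1,j}$ in $x_2,\dots,x_n$). If $\mathbf h$ is the coordinate vector of $A(x)=\sum_{j=0}^d x_1^{d-j}A_j(x_2,\dots,x_n)$ ($A_j$ homogeneous of degree $j$), then $\mathbf h_j$ is the coordinate vector of $A_j$ in the left lexicographic basis of degree-$j$ monomials in $x_2,\dots,x_n$, and $\mathbf h=(\mathbf h_0,\dots,\mathbf h_d)$. *)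

(* Defs.v *)
From HB Require Import structures.
From mathcomp Require Import all_boot all_order all_algebra.
Set Implicit Arguments. Unset Strict Implicit. Unset Printing Implicit Defensive.
Import Order.TTheory GRing.Theory Num.Theory.
Local Open Scope ring_scope.

(* A monomial x_1^{e_1} ... x_m^{e_m} in m variables is encoded by its
   exponent sequence [:: e_1; ...; e_m].
   [mons m j] is the list of all degree-j monomials in m variables in
   LEFT LEXICOGRAPHIC order (x_1^j first, i.e. lexicographically decreasing
   exponent sequences). *)
Fixpoint mons (m j : nat) : seq (seq nat) :=
  match m with
  | 0 => if j == 0%N then [:: [::]] else [::]
  | m'.+1 => flatten [seq [seq e :: s | s <- mons m' (j - e)] | e <- rev (iota 0 j.+1)]
  end.

Definition dimf (m j : nat) : nat := 'C(m + j - 1, j).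

Definition monAt (m j : nat) (k : nat) : seq nat := nth [::] (mons m j) k.

(* J_{m,j}: matrix of multiplication by x_1 + ... + x_m, from degree-j forms
   to degree-(j+1) forms, w.r.t. the left lexicographic bases. *)
Definition Jmx (R : nzRingType) (m j : nat) : 'M[R]_(dimf m j.+1, dimf m j) :=
  \matrix_(r, c) ((#|[set i : 'I_m | monAt m j.+1 r == incr_nth (monAt m j c) i]|)%:R).

Definition Nneg (R : realFieldType) (k : nat) (x : 'cV[R]_k) : nat :=
  #|[set i : 'I_k | x i 0 < 0]|.
Definition Rnz (R : realFieldType) (k : nat) (x : 'cV[R]_k) : nat :=
  #|[set i : 'I_k | x i 0 != 0]|.

Definition coefv (R : nzRingType) (n d : nat) (h : 'cV[R]_(dimf n d)) (mo : seq nat) : R :=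
  \sum_(k < dimf n d | monAt n d k == mo) h k 0.

(* h_j : coordinate vector (in x_2..x_n, left lex basis) of A_j, where
   A(x) = sum_j x_1^(d-j) A_j(x_2,...,x_n). *)
Definition hblock (R : nzRingType) (n d : nat) (h : 'cV[R]_(dimf n d)) (j : nat)
  : 'cV[R]_(dimf n.-1 j) :=
  \col_k coefv h ((d - j)%N :: monAt n.-1 j k).

Definition Rgamma (R : realFieldType) (n d : nat) (h : 'cV[R]_(dimf n d)) (i : nat) : nat :=
  match i with
  | 0 => Rnz (hblock h 0)
  | j.+1 => Rnz (Jmx R n.-1 j *m hblock h j + hblock h j.+1)
  end.

(* Main.v *)
Require Import Defs.
From HB Require Import structures.
From mathcomp Require Import all_boot all_order all_algebra.
From mathcomp Require Import zify ring lra.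
Set Implicit Arguments. Unset Strict Implicit. Unset Printing Implicit Defensive.
Import Order.TTheory GRing.Theory Num.Theory.

Definition valid (m j : nat) (s : seq nat) := (size s == m) && (sumn s == j).

Lemma mem_mons m j s : (s \in mons m j) = valid m j s.
Proof.
elim: m j s => [|m IH] j s /=.
  case: j => [|j] /=; rewrite ?inE /valid.
    by case: s => [|x s] //=.
  by case: s => [|x s] //=; rewrite andbF.
apply/flattenP/idP.
  case=> t /mapP [e]; rewrite mem_rev -[0 :: iota 1 j]/(iota 0 j.+1) mem_iota add0n => /andP [_ lee] -> /mapP [s' ].
  rewrite IH => /andP [/eqP hs /eqP hsum] ->.
  by rewrite /valid /= hs hsum eqxx /= subnKC // -ltnS.
case: s => [|e s'] //= /andP [/= hs hsum].
move: hs hsum; rewrite eqSS => /eqP hs /eqP hsum.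
exists [seq e :: s | s <- mons m (j - e)].
  apply/mapP; exists e => //; rewrite mem_rev -[0 :: iota 1 j]/(iota 0 j.+1) mem_iota add0n /= ltnS -hsum.
  exact: leq_addr.
by apply/mapP; exists s' => //; rewrite IH /valid hs -hsum addKn !eqxx.
Qed.

Lemma uniq_mons m j : uniq (mons m j).
Proof.
elim: m j => [|m IH] j /=; first by case: j.
apply: (@allpairs_uniq_dep _ (fun _ => _) _ (fun e s => e :: s)).
- by rewrite rev_uniq -[0 :: iota 1 j]/(iota 0 j.+1) iota_uniq.
- by move=> e _; apply: IH.
- by move=> [x1 y1] [x2 y2] _ _ /= [-> ->].
Qed.

Definition dimf' := dimf.

Lemma dimf1 m j : dimf m.+1 j = 'C(m + j, j).
Proof. by rewrite /dimf addSn subn1. Qed.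
Lemma dimf2 m j : dimf m j.+1 = 'C(m + j, j.+1).
Proof. by rewrite /dimf addnS subn1. Qed.

Lemma dimfS m j : dimf m.+1 j.+1 = dimf m.+1 j + dimf m j.+1.
Proof. by rewrite dimf1 dimf1 dimf2 addnS binS addnC. Qed.

Lemma sum_dimf m j : \sum_(e <- iota 0 j.+1) dimf m (j - e) = dimf m.+1 j.
Proof.
elim: j => [|j IHj].
  by rewrite big_cons big_nil /dimf !bin0.
rewrite dimfS -IHj (_ : iota 0 j.+2 = 0 :: iota 1 j.+1) // big_cons subn0 addnC; congr (_ + _).
rewrite -[1]/(1 + 0) iotaDl big_map; apply: eq_bigr => e _.
by rewrite add1n subSS.
Qed.

Lemma size_mons m j : size (mons m j) = dimf m j.
Proof.
elim: m j => [|m IH] j /=.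
  by case: j => [|j] //=; rewrite /dimf /= subn1 /= bin_small.
rewrite size_allpairs_dep -sum_dimf.
rewrite map_rev sumn_rev sumnE big_map; apply: eq_bigr => e _; exact: IH.
Qed.

Fixpoint decr (s : seq nat) (i : nat) : seq nat :=
  match s with
  | [::] => [::]
  | x :: s' => if i is i'.+1 then x :: decr s' i' else x.-1 :: s'
  end.

Lemma incr_decr (mu nu : seq nat) i : size mu = size nu -> i < size nu ->
  (nu == incr_nth mu i) = (0 < nth 0 nu i) && (mu == decr nu i).
Proof.
elim: nu mu i => [|x nu IH] [|y mu] i //= [hs] hi.
case: i hi => [|i] hi /=.
  by case: x => [|x]; rewrite !eqseq_cons //= eqSS (eq_sym y) (eq_sym mu).
by rewrite !eqseq_cons IH // (eq_sym y); case: (x == y); rewrite ?andbF.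
Qed.

Section Coef.
Variable R : realFieldType.
Local Open Scope ring_scope.

Lemma monAt_valid m j (k : 'I_(dimf m j)) : valid m j (monAt m j k).
Proof. by rewrite -mem_mons /monAt mem_nth // size_mons. Qed.

Lemma monAt_inj m j (k k' : 'I_(dimf m j)) : (monAt m j k == monAt m j k') = (k == k').
Proof. by rewrite /monAt nth_uniq ?size_mons // uniq_mons. Qed.

Lemma coefv_monAt m j (v : 'cV[R]_(dimf m j)) (k : 'I_(dimf m j)) : coefv v (monAt m j k) = v k 0.
Proof. by rewrite /coefv (big_pred1 k) // => k'; rewrite /= monAt_inj. Qed.

Lemma coefv_invalid m j (v : 'cV[R]_(dimf m j)) mu : ~~ valid m j mu -> coefv v mu = 0.
Proof. by move=> H; rewrite /coefv big1 // => k /eqP hk; rewrite -hk monAt_valid in H. Qed.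

Lemma valid_ex m j mu : valid m j mu -> exists k : 'I_(dimf m j), monAt m j k = mu.
Proof.
move=> H; have Hi : (index mu (mons m j) < dimf m j)%N by rewrite -size_mons index_mem mem_mons.
by exists (Ordinal Hi); rewrite /monAt nth_index // mem_mons.
Qed.

Lemma card_count m j (P : pred (seq nat)) :
  #|[set k : 'I_(dimf m j) | P (monAt m j k)]| = count P (mons m j).
Proof. by rewrite -sum1dep_card -sum1_count (big_nth [::]) size_mons big_mkord. Qed.

Lemma Rnz_count m j (x : 'cV[R]_(dimf m j)) :
  Rnz x = count (fun mu => coefv x mu != 0) (mons m j).
Proof.
rewrite /Rnz -card_count; apply: eq_card => k; by rewrite !inE coefv_monAt.
Qed.

Lemma Nneg_count m j (x : 'cV[R]_(dimf m j)) :
  Nneg x = count (fun mu => coefv x mu < 0) (mons m j).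
Proof.
rewrite /Nneg -card_count; apply: eq_card => k; by rewrite !inE coefv_monAt.
Qed.

Lemma coefvD m j (x y : 'cV[R]_(dimf m j)) mu : coefv (x + y) mu = coefv x mu + coefv y mu.
Proof. by rewrite /coefv -big_split; apply: eq_bigr => k _; rewrite mxE. Qed.

Lemma J_coef m j (v : 'cV[R]_(dimf m j)) nu : valid m j.+1 nu ->
  coefv (Jmx R m j *m v) nu =
  \sum_(i < m) (if (0 < nth 0%N nu i)%N then coefv v (decr nu i) else 0).
Proof.
move=> /valid_ex [r <-]; rewrite coefv_monAt mxE.
have E (c : 'I_(dimf m j)) : (#|[set i : 'I_m | monAt m j.+1 r == incr_nth (monAt m j c) i]|)%:R
   = \sum_(i < m) ((monAt m j.+1 r == incr_nth (monAt m j c) i) : nat)%:R :> R.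
  by rewrite -sum1dep_card natr_sum big_mkcond; apply: eq_bigr => i _; case: ifP.
under eq_bigr do rewrite mxE E mulr_suml.
rewrite exchange_big /=; apply: eq_bigr => i _.
have hs (c : 'I_(dimf m j)) : size (monAt m j c) = size (monAt m j.+1 r).
  by have /andP [/eqP -> _] := monAt_valid c; have /andP [/eqP -> _] := monAt_valid r.
have hi : (i < size (monAt m j.+1 r))%N by have /andP [/eqP -> _] := monAt_valid r.
case: ifP => hpos.
  rewrite /coefv [RHS]big_mkcond; apply: eq_bigr => c _.
  rewrite incr_decr // hpos /=; case: eqP => _; by rewrite ?mul1r ?mul0r.
by apply: big1 => c _; rewrite incr_decr // hpos /= mul0r.
Qed.

End Coef.

Fixpoint addm (a b : seq nat) : seq nat :=
  match a, b with
  | x :: a', y :: b' => (x + y) :: addm a' b'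
  | _, _ => [::]
  end.

Lemma size_addm a b : size a = size b -> size (addm a b) = size a.
Proof. by elim: a b => [|x a IH] [|y b] //= [/IH ->]. Qed.

Lemma sumn_addm a b : size a = size b -> sumn (addm a b) = sumn a + sumn b.
Proof. by elim: a b => [|x a IH] [|y b] //= [/IH ->]; lia. Qed.

Lemma nth_addm a b e : size a = size b -> nth 0 (addm a b) e = nth 0 a e + nth 0 b e.
Proof.
elim: a b e => [|x a IH] [|y b] e //=; rewrite ?nth_nil //= => -[hs].
case: e => [|e] //=; exact: IH.
Qed.

Lemma addm0 a b : size a = size b -> sumn b = 0 -> addm a b = a.
Proof.
elim: a b => [|x a IH] [|y b] //= [hs] /eqP; rewrite addn_eq0 => /andP [/eqP -> /eqP h].
by rewrite addn0 IH.
Qed.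

Lemma size_decr s i : size (decr s i) = size s.
Proof. by elim: s i => [|x s IH] [|i] //=; rewrite IH. Qed.

Lemma nth_decr s i e : nth 0 (decr s i) e = if e == i then (nth 0 s e).-1 else nth 0 s e.
Proof.
elim: s i e => [|x s IH] i e /=; first by rewrite !nth_nil; case: ifP.
by case: i => [|i]; case: e => [|e] //=; rewrite IH eqSS.
Qed.

Lemma sumn_decr s i : 0 < nth 0 s i -> sumn (decr s i) = (sumn s).-1.
Proof.
elim: s i => [|x s IH] i /=; first by rewrite nth_nil.
case: i => [|i] /= h; first by lia.
rewrite (IH _ h); have : 0 < sumn s.
  by move: h; elim: (s) (i) => [|z t IHt] [|k] //=; rewrite ?nth_nil //; [lia | move/IHt; lia].
lia.
Qed.

Lemma decr_addm a b e : size a = size b -> 0 < nth 0 b e ->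
  decr (addm a b) e = addm a (decr b e).
Proof.
elim: a b e => [|x a IH] [|y b] [|e] //= [hs] h; last by rewrite IH.
by congr (_ :: _); lia.
Qed.

Lemma addm_inj a b b' : size a = size b -> size a = size b' -> addm a b = addm a b' -> b = b'.
Proof.
elim: a b b' => [|x a IH] [|y b] [|y' b'] //= [h1] [h2] [h3 h4].
by congr (_ :: _); [lia | exact: IH].
Qed.

Lemma pos_ex b : 0 < sumn b -> exists2 e, e < size b & 0 < nth 0 b e.
Proof.
elim: b => [|x b IH] //=; case: x => [|x] /=.
  by move=> /IH [e he hp]; exists e.+1.
by move=> _; exists 0.
Qed.

Section Core.
Variable R : realFieldType.
Local Open Scope ring_scope.
Variables (n' d k : nat) (a p : seq nat -> R) (alpha : seq nat).

Definition S (f : seq nat -> R) (nu : seq nat) : R :=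
  \sum_(e < n') (if (0 < nth 0 nu e)%N then f (decr nu e) else 0).

Hypothesis n'pos : (0 < n')%N.
Hypothesis kd : (k <= d)%N.
Hypothesis Ha0 : forall mu, ~~ valid n'.+1 d mu -> a mu = 0.
Hypothesis HP : forall t nu, size nu = n' -> (t + sumn nu = d.+1)%N ->
  p (t :: nu) = (if (0 < t)%N then a (t.-1 :: nu) else 0) + S (fun x => a (t :: x)) nu.
Hypothesis Hpos : forall nu, 0 <= p nu.
Hypothesis Hneg : exists mu, a mu < 0.
Hypothesis Hsa : size alpha = n'.
Hypothesis Hsuma : sumn alpha = k.
Hypothesis Hpa : p ((d.+1 - k)%N :: alpha) != 0.
Hypothesis Hk0 : forall i nu, (i <= d)%N -> i != k -> size nu = n' -> sumn nu = i ->
  p ((d.+1 - i)%N :: nu) = 0.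

Lemma Sscale c f nu : c * S f nu = S (fun x => c * f x) nu.
Proof. rewrite /S mulr_sumr; apply: eq_bigr => e _; case: ifP => _ //; exact: mulr0. Qed.

Lemma a_invalid i nu : (i <= d)%N -> ~~ ((size nu == n') && (sumn nu == i)) -> a ((d - i)%N :: nu) = 0.
Proof.
move=> id H; apply: Ha0; apply: contra H; rewrite /valid /= eqSS => /andP [-> /eqP h].
by apply/eqP; lia.
Qed.

Lemma R1 i nu : (i <= d)%N -> size nu = n' -> sumn nu = i ->
  p ((d.+1 - i)%N :: nu) = a ((d - i)%N :: nu) + S (fun x => a ((d.+1 - i)%N :: x)) nu.
Proof.
move=> id hs hsum; rewrite HP //; last by lia.
have -> : (0 < d.+1 - i)%N by lia.
by have -> : (d.+1 - i).-1 = (d - i)%N by lia.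
Qed.

Lemma blockrec i nu : (i <= d)%N -> i != k -> size nu = n' -> sumn nu = i ->
  a ((d - i)%N :: nu) = - S (fun x => a ((d.+1 - i)%N :: x)) nu.
Proof.
move=> id ik hs hsum; have := R1 id hs hsum; rewrite Hk0 // => /eqP.
by rewrite eq_sym addr_eq0 => /eqP.
Qed.

Lemma zero_blocks i : (i < k)%N -> forall nu, a ((d - i)%N :: nu) = 0.
Proof.
elim: i => [|i IH] ik nu.
  have [/andP [/eqP hs /eqP hsum]|hv] := boolP ((size nu == n') && (sumn nu == 0%N)); last first.
    by apply: a_invalid.
  rewrite blockrec //; last by rewrite neq_ltn ik.
  rewrite /S big1 ?oppr0 // => e _; case: ifP => // _; apply: Ha0.
  by rewrite /valid /= negb_and; apply/orP; right; apply/eqP; lia.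
have [/andP [/eqP hs /eqP hsum]|hv] := boolP ((size nu == n') && (sumn nu == i.+1)); last first.
  by apply: a_invalid; lia.
rewrite blockrec //; last 2 first.
- by lia.
- by rewrite neq_ltn ik.
rewrite /S big1 ?oppr0 // => e _; case: ifP => // _.
have -> : (d.+1 - i.+1 = d - i)%N by lia.
apply: IH; lia.
Qed.

Lemma block_k nu : (0 <= a ((d - k)%N :: nu)) /\ (nu = alpha -> 0 < a ((d - k)%N :: nu)).
Proof.
have [/andP [/eqP hs /eqP hsum]|hv] := boolP ((size nu == n') && (sumn nu == k)); last first.
  by rewrite a_invalid //; split => // E; move: hv; rewrite E Hsa Hsuma !eqxx.
have E : a ((d - k)%N :: nu) = p ((d.+1 - k)%N :: nu).
  rewrite R1 // /S big1 ?addr0 // => e _; case: ifP => // _.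
  have [k0|kpos] := posnP k.
    apply: Ha0; rewrite /valid /= negb_and; apply/orP; right; apply/eqP; lia.
  have -> : (d.+1 - k = d - k.-1)%N by lia.
  by apply: zero_blocks; lia.
rewrite E; split => // ea; rewrite lt_def Hpos andbT; move: Hpa; by rewrite ea.
Qed.

Lemma propagate (f : seq nat -> R) j :
  (forall nu, 0 <= f nu) ->
  (forall b, size b = n' -> sumn b = j -> 0 < f (addm alpha b)) ->
  (forall nu, 0 <= S f nu) /\
  (forall b, size b = n' -> sumn b = j.+1 -> 0 < S f (addm alpha b)).
Proof.
move=> H1 H2; split.
  by move=> nu; apply: sumr_ge0 => e _; case: ifP.
move=> b hs hsum; have [e he hb] : exists2 e, (e < size b)%N & (0 < nth 0 b e)%N.
  by apply: pos_ex; lia.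
rewrite hs in he.
rewrite /S (bigD1 (Ordinal he)) //=.
have -> : (0 < nth 0 (addm alpha b) e)%N by rewrite nth_addm ?Hsa //; lia.
have h1 : 0 < f (decr (addm alpha b) e).
  rewrite decr_addm ?Hsa //; apply: H2; first by rewrite size_decr.
  by rewrite sumn_decr // hsum.
have h2 : 0 <= \sum_(i < n' | i != Ordinal he) (if (0 < nth 0 (addm alpha b) i)%N then f (decr (addm alpha b) i) else 0).
  by apply: sumr_ge0 => i _; case: ifP.
lra.
Qed.

Lemma step3 j : (k + j <= d)%N ->
  (forall nu, 0 <= (-1) ^+ j * a ((d - (k + j))%N :: nu)) /\
  (forall b, size b = n' -> sumn b = j -> 0 < (-1) ^+ j * a ((d - (k + j))%N :: addm alpha b)).
Proof.
elim: j => [|j IH] hj.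
  rewrite addn0 expr0; split => [nu|b hs hsum]; rewrite mul1r.
    by case: (block_k nu).
  by rewrite addm0 ?Hsa //; case: (block_k alpha) => _ ->.
have [IH1 IH2] := IH (ltac:(lia)).
have [P1 P2] := propagate IH1 IH2.
have key nu : size nu = n' -> sumn nu = (k + j.+1)%N ->
  (-1) ^+ j.+1 * a ((d - (k + j.+1))%N :: nu) = S (fun x => (-1) ^+ j * a ((d - (k + j))%N :: x)) nu.
  move=> hs hsum; rewrite blockrec //; last by apply/eqP; lia.
  rewrite exprS mulN1r mulrNN Sscale.
  by have -> : (d.+1 - (k + j.+1) = d - (k + j))%N by lia.
split.
  move=> nu; have [/andP [/eqP hs /eqP hsum]|hv] := boolP ((size nu == n') && (sumn nu == (k + j.+1)%N)).
    by rewrite key.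
  by rewrite a_invalid ?mulr0 //.
move=> b hs hsum; rewrite key; first exact: P2.
  by rewrite size_addm ?Hsa.
by rewrite sumn_addm ?Hsa // Hsuma hsum.
Qed.

Lemma last_block b : size b = n' -> sumn b = (d - k).+1 ->
  0 < (-1) ^+ (d - k) * p (0%N :: addm alpha b).
Proof.
have [Q1 Q2] := step3 (j := (d - k)%N) (ltac:(lia)).
rewrite (_ : (d - (k + (d - k)) = 0)%N) in Q1 Q2; last by lia.
have [P1 P2] := propagate Q1 Q2.
move=> hs hsum; rewrite HP; last 2 first.
- by rewrite size_addm ?Hsa.
- by rewrite sumn_addm ?Hsa // Hsuma hsum; lia.
by rewrite /= add0r Sscale; apply: P2.
Qed.

Lemma sumn_nseq0 q : sumn (nseq q 0%N) = 0%N.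
Proof. by elim: q. Qed.

Lemma core_main : exists L : seq (seq nat),
  [/\ uniq L, all (valid n'.+1 d.+1) L, all (fun x => p x != 0) L &
      ('C(n'.+2, 3) + 1 <= size L)%N].
Proof.
have hm0 : (d - k)%N != 0%N.
  apply/negP => /eqP m0; have kd' : k = d by lia.
  case: Hneg => mu hmu.
  suff : 0 <= a mu by lra.
  have [hv|hv] := boolP (valid n'.+1 d mu); last by rewrite Ha0.
  case: mu hmu hv => [|t nu] hmu; first by rewrite /valid.
  rewrite /valid /= eqSS => /andP [/eqP hs /eqP hsum].
  have -> : t = (d - sumn nu)%N by lia.
  have [ik|ik] := ltnP (sumn nu) k; first by rewrite zero_blocks.
  have -> : sumn nu = k by lia.
  by case: (block_k nu).
have hodd : ~~ odd (d - k).
  apply/negP => hodd.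
  have := last_block (b := ((d - k).+1 :: nseq n'.-1 0%N)).
  rewrite -signr_odd hodd expr1 mulN1r /= size_nseq sumn_nseq0 addn0.
  have := Hpos (0%N :: addm alpha ((d - k).+1 :: nseq n'.-1 0%N)).
  move=> h1 h2; have := h2 (ltac:(lia)) erefl; lra.
have hm2 : (2 <= d - k)%N.
  by move: hm0 hodd; case: (d - k)%N => [|[|q]].
have hpos b : size b = n' -> sumn b = (d - k).+1 -> 0 < p (0%N :: addm alpha b).
  move=> hs hsum; have := last_block hs hsum.
  by rewrite -signr_odd (negbTE hodd) expr0 mul1r.
exists (((d.+1 - k)%N :: alpha) :: [seq 0%N :: addm alpha b | b <- mons n' (d - k).+1]).
split.
- rewrite /= map_inj_in_uniq ?uniq_mons ?andbT.
    by apply/mapP => -[b _ [E _]]; lia.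
  move=> b b' hb hb' [E]; apply: (addm_inj (a := alpha)) => //.
    by move: hb; rewrite mem_mons Hsa => /andP [/eqP -> _].
  by move: hb'; rewrite mem_mons Hsa => /andP [/eqP -> _].
- rewrite /= all_map; apply/andP; split.
    by rewrite /valid /= Hsa Hsuma eqxx /=; apply/eqP; lia.
  apply/allP => b; rewrite mem_mons => /andP [/eqP hs /eqP hsum] /=.
  rewrite /valid /= size_addm ?Hsa ?hs // sumn_addm ?Hsa ?hs // Hsuma hsum.
  by apply/andP; split; apply/eqP; lia.
- rewrite /= Hpa all_map; apply/allP => b; rewrite mem_mons => /andP [/eqP hs /eqP hsum] /=.
  exact: lt0r_neq0 (hpos _ hs hsum).
rewrite /= size_map size_mons dimf2 addn1 ltnS.
have e1 : 'C(n'.+2, 3) = 'C(n'.+2, n'.-1).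
  by rewrite -(@bin_sub n'.+2 3) //; congr 'C(_, _); lia.
have e2 : 'C(n' + (d - k), (d - k).+1) = 'C(n' + (d - k), n'.-1).
  by rewrite -(@bin_sub (n' + (d - k)) (d - k).+1); [congr 'C(_, _); lia | lia].
rewrite e1 e2; apply: leq_bin2l; lia.
Qed.

End Core.

Local Open Scope ring_scope.

Lemma coefv_hblock (R : realFieldType) (n d j : nat) (h : 'cV[R]_(dimf n d)) nu :
  valid n.-1 j nu -> coefv (hblock h j) nu = coefv h ((d - j)%N :: nu).
Proof. by move=> /valid_ex [r <-]; rewrite coefv_monAt mxE. Qed.

Unset Implicit Arguments.
Set Strict Implicit.

Theorem lemma5p3 (R : realFieldType) (n d : nat) (h : 'cV[R]_(dimf n d)) :
  (2 <= n)%N -> (2 <= d)%N ->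
  (1 <= Nneg h)%N ->
  (forall r, 0 <= (Jmx R n d *m h) r 0) ->
  (exists2 i, (i <= d)%N & Rgamma h i <> 0%N /\
     forall i', (i' <= d)%N -> i' <> i -> Rgamma h i' = 0%N) ->
  ('C(n.+1, 3) + 1 <= Rnz (Jmx R n d *m h))%N.
Proof.
move=> hn hd hN hJ [k hk [hRk hRo]].
move: h hN hJ hRk hRo; case: n hn => [|n'] // hn h hN hJ hRk hRo.
set a := coefv h.
set p := coefv (Jmx R n'.+1 d *m h).
have Ha0 : forall mu, ~~ valid n'.+1 d mu -> a mu = 0 by move=> mu; apply: coefv_invalid.
have HP : forall t nu, size nu = n' -> (t + sumn nu = d.+1)%N ->
    p (t :: nu) = (if (0 < t)%N then a (t.-1 :: nu) else 0) + S n' (fun x => a (t :: x)) nu.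
  move=> t nu hs hsum; rewrite /p J_coef; last by rewrite /valid /= hs eqxx /= hsum.
  rewrite big_ord_recl /=; congr (_ + _); apply: eq_bigr => e _; by rewrite lift0.
have Hpos : forall nu, 0 <= p nu.
  move=> nu; have [hv|hv] := boolP (valid n'.+1 d.+1 nu); last by rewrite /p coefv_invalid.
  by have [r <-] := valid_ex hv; rewrite /p coefv_monAt.
have Hneg : exists mu, a mu < 0.
  move: hN; rewrite Nneg_count -has_count => /hasP [mu _ H]; by exists mu.
have Rg : forall i, (i <= d)%N ->
    Rgamma h i = count (fun nu => p ((d.+1 - i)%N :: nu) != 0) (mons n' i).
  case=> [|j] hj; rewrite /Rgamma.
    rewrite Rnz_count; apply: eq_in_count => nu; rewrite mem_mons => hv.
    move: (hv) => /andP [/eqP hs /eqP hsum].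
    rewrite coefv_hblock // subn0 HP ?hs ?hsum ?addn0 //= /S big1 ?addr0 // => e _.
    case: ifP => // _; apply: Ha0; rewrite /valid /= negb_and; apply/orP; right; apply/eqP; lia.
  rewrite Rnz_count; apply: eq_in_count => nu; rewrite mem_mons => hv.
  move: (hv) => /andP [/eqP hs /eqP hsum].
  rewrite coefvD J_coef // coefv_hblock //.
  rewrite HP ?hs //; last by rewrite hsum; lia.
  have -> : (0 < d.+1 - j.+1)%N by lia.
  have -> : (d.+1 - j.+1).-1 = (d - j.+1)%N by lia.
  rewrite addrC; congr (_ + _ != 0); rewrite /S; apply: eq_bigr => e _.
  case: ifP => // he; rewrite coefv_hblock.
    by congr (coefv h (_ :: _)); lia.
  by rewrite /valid size_decr sumn_decr // hs hsum !eqxx.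
have [alpha ha hpa] : exists2 alpha, alpha \in mons n' k & p ((d.+1 - k)%N :: alpha) != 0.
  apply/hasP; rewrite has_count -Rg //; move: hRk; case: (Rgamma h k) => //.
move: ha; rewrite mem_mons => /andP [/eqP hsa /eqP hsuma].
have Hk0 : forall i nu, (i <= d)%N -> i != k -> size nu = n' -> sumn nu = i ->
    p ((d.+1 - i)%N :: nu) = 0.
  move=> i nu id ik hs hsum; have := hRo i id (elimN eqP ik).
  rewrite Rg // => /eqP; rewrite -leqn0 leqNgt -has_count => /hasPn /(_ nu).
  rewrite mem_mons /valid hs hsum !eqxx => /(_ isT); by move/negPn/eqP.
have n'pos : (0 < n')%N by lia.
have [L [uL vL pL sL]] := core_main n'pos hk Ha0 HP Hpos Hneg hsa hsuma hpa Hk0.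
rewrite Rnz_count -size_filter; apply: (leq_trans sL); apply: uniq_leq_size => // x xL.
rewrite mem_filter mem_mons (allP vL x xL) andbT; exact: (allP pL x xL).
Qed.
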